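(* Let $m\ge2$, $G=CK(2m-1)$, and let $B$ be a blocker for the simple Hamiltonian paths of $G$ whose $m$ edges are parallel (or equal) to the boundary edges $[0,1],\dots,[m-1,m]$, one per direction. Let $[\alpha,\alpha+1]$ and $[m-\delta-1,m-\delta]$ be the first and last edges of $\langle0,1,\dots,m\rangle$ belonging to $B$. Let $[i,j],[k,l]\in B$ with $\alpha<i<k<m-\delta$ and $j,l\notin\{\alpha,\alpha+1,\dots,m-\delta\}$. Then: (1) the edges $[i,j]$ and $[k,l]$ do not cross, i.e., the points $i,k,l,j$ appear in this order on the boundary of the convex hull of $V(G)$; (2) $k-i$ is smaller than the distance between $l$ and $j$.
   Context: $CK(2m-1)$ is the complete convex geometric graph on $2m-1$ points in convex position, labelled clockwise $0,\dots,2m-2$ (elements of $\mathbb{Z}_{2m-1}$), with all segments as edges; boundary edges are $[i,i+1]$. The direction of $[i,j]$ is $i+j\pmod{2m-1}$; edges are parallel if they have the same direction. The distance between vertices $x,y$ is $\min(|x-y|,(2m-1)-|x-y|)$. A simple Hamiltonian path (SHP) is a path through all vertices whose edges pairwise do not cross; a blocker for SHPs is an edge set of smallest possible size sharing an edge with every SHP. *)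

(* Defs.v *)
From mathcomp Require Import all_boot.
Set Implicit Arguments. Unset Strict Implicit. Unset Printing Implicit Defensive.

(* Vertices of CK(n): 'I_n, labelled clockwise 0..n-1.
   An edge [a,b] (a <> b) is the 2-element set [set a; b]. *)

Definition is_edge (n : nat) (e : {set 'I_n}) : bool := #|e| == 2.

(* Two edges cross iff their (four distinct) endpoints interleave along the
   boundary; since labels increase clockwise this is interleaving in 0..n-1. *)
Definition crossing (n : nat) (e f : {set 'I_n}) : Prop :=
  exists a b c d : 'I_n, e = [set a; b] /\ f = [set c; d] /\
    ((a < c < b) && (b < d) \/ (c < a < d) && (d < b))%N.

Definition path_edges (n : nat) (p : seq 'I_n) : seq {set 'I_n} :=
  [seq [set x.1; x.2] | x <- zip p (behead p)].

Definition is_SHP (n : nat) (p : seq 'I_n) : Prop :=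
  perm_eq p (enum 'I_n) /\
  (forall e f, e \in path_edges p -> f \in path_edges p -> ~ crossing e f).

Definition meets_all_SHP (n : nat) (B : {set {set 'I_n}}) : Prop :=
  forall p : seq 'I_n, is_SHP p -> exists2 e, e \in B & e \in path_edges p.

Definition is_blocker (n : nat) (B : {set {set 'I_n}}) : Prop :=
  (forall e, e \in B -> is_edge e) /\ meets_all_SHP B /\
  (forall B' : {set {set 'I_n}}, (forall e, e \in B' -> is_edge e) ->
     meets_all_SHP B' -> #|B| <= #|B'|)%N.

Definition direction (n : nat) (e : {set 'I_n}) : nat :=
  (\sum_(x in e) nat_of_ord x) %% n.

Definition has_edge (n : nat) (B : {set {set 'I_n}}) (x y : nat) : bool :=
  [exists a : 'I_n, exists b : 'I_n,
     [&& nat_of_ord a == x, nat_of_ord b == y & [set a; b] \in B]].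

Definition vdist (n x y : nat) : nat :=
  minn ((x - y) + (y - x)) (n - ((x - y) + (y - x))).

Definition cw_offset (n i x : nat) : nat := (x + n - i) %% n.

(* Main.v *)
Require Import Defs.
From mathcomp Require Import all_boot zify.
Set Implicit Arguments. Unset Strict Implicit. Unset Printing Implicit Defensive.

Lemma modn_q x q n : q * n <= x < q.+1 * n -> x %% n = x - q * n.
Proof.
move=> /andP[h1 h2]; rewrite -{1}(subnK h1) addnC modnMDl modn_small //.
rewrite mulSn in h2; lia.
Qed.

Definition ordn n (Hn : 0 < n) x : 'I_n := Ordinal (ltn_pmod x Hn).

Definition cw n (x z : nat) := (z + n - x) %% n.

Lemma cw_val n x z : x < n -> z < n -> cw n x z = if x <= z then z - x else z + n - x.
Proof.
move=> hx hz; rewrite /cw; case: ifP => h.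
  rewrite (@modn_q _ 1); [lia|lia].
rewrite modn_small; lia.
Qed.

Lemma cw_fwd n X D : 0 < n -> D < n -> cw n (X %% n) ((X + D) %% n) = D.
Proof.
move=> hn hD; rewrite -modnDml.
have hx : X %% n < n by apply: ltn_pmod.
move: (X %% n) hx => x hx.
case: (ltnP (x + D) n) => h.
  rewrite (modn_small h) /cw (@modn_q _ 1); lia.
rewrite (@modn_q (x + D) 1); last lia.
rewrite /cw modn_small; lia.
Qed.

Lemma cw_self n x : 0 < n -> cw n x x = 0.
Proof. by move=> hn; rewrite /cw addnC addnK modnn. Qed.

Lemma window_inj n L x y : 0 < n -> L <= x -> x < L + n -> L <= y -> y < L + n ->
  x %% n = y %% n -> x = y.
Proof.
move=> hn h1 h2 h3 h4 he.
wlog hxy : x y h1 h2 h3 h4 he / x <= y.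
  move=> H; case: (leqP x y) => hl; first exact: H.
  by symmetry; apply: H => //; apply: ltnW.
have := @cw_fwd n x (y - x) hn ltac:(lia).
rewrite subnKC // -he cw_self //; lia.
Qed.

Lemma set2_cases (T : finType) (a b x y : T) : [set a; b] = [set x; y] ->
  (a = x \/ a = y) /\ (b = x \/ b = y).
Proof.
move=> h; split.
  by have := set21 a b; rewrite h => /set2P.
by have := set22 a b; rewrite h => /set2P.
Qed.

Lemma crossing_sym n (e f : {set 'I_n}) : crossing e f -> crossing f e.
Proof.
case=> a [b [c [d [he [hf H]]]]]; exists c, d, a, b; split=> //; split=> //.
by case: H => H; [right|left].
Qed.

Lemma crossing_cw n (e f : {set 'I_n}) (x y : 'I_n) :
  crossing e f -> e = [set x; y] ->
  exists z w : 'I_n, f = [set z; w] /\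
   [/\ 0 < cw n x z, cw n x z < cw n x y & cw n x y < cw n x w].
Proof.
case=> a [b [c [d [he [hf H]]]]] hxy.
have [ha hb] := set2_cases (etrans (esym he) hxy).
have xn := ltn_ord x; have yn := ltn_ord y; have cn := ltn_ord c; have dn := ltn_ord d.
case: H => /andP[/andP[H1 H2] H3].
- case: ha => ?; case: hb => ?; subst a b.
  + lia.
  + exists c, d; split => //; rewrite !cw_val //; split; repeat case: ifP => ?; lia.
  + exists d, c; split; first by rewrite hf setUC.
    rewrite !cw_val //; split; repeat case: ifP => ?; lia.
  + lia.
- case: ha => ?; case: hb => ?; subst a b.
  + lia.
  + exists d, c; split; first by rewrite hf setUC.
    rewrite !cw_val //; split; repeat case: ifP => ?; lia.
  + exists c, d; split => //; rewrite !cw_val //; split; repeat case: ifP => ?; lia.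
  + lia.
Qed.

Lemma no_self_cross n (e : {set 'I_n}) : ~ crossing e e.
Proof.
move=> hc; have hc' := hc; case: hc' => a [b [c [d [he _]]]].
have [z [w [hf [h1 h2 h3]]]] := crossing_cw hc he.
have [hz _] := set2_cases (etrans (esym hf) he).
have an := ltn_ord a.
case: hz => ?; subst z.
  by rewrite cw_self in h1; [lia| apply: leq_ltn_trans an].
lia.
Qed.
Definition vv (lo : nat -> nat) (R : nat -> bool) t := if R t then lo t + t else lo t.

Definition arc_ok n (lo : nat -> nat) (R : nat -> bool) :=
  forall t, t.+1 < n -> if R t.+1 then lo t.+1 = lo t else (lo t.+1).+1 = lo t.

Lemma arc_mono n lo R : arc_ok n lo R -> forall s t, s <= t -> t < n ->
  lo t <= lo s /\ lo s + s <= lo t + t.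
Proof.
move=> H s; elim=> [|t IH] hst ht; first by have -> : s = 0 by lia.
case: (ltnP t s) => hts; first by have -> : s = t.+1 by lia.
have [h1 h2] := IH hts (ltnW ht).
have := H t ht; case: (R t.+1) => h; lia.
Qed.

Lemma vv_range lo R t : lo t <= vv lo R t <= lo t + t.
Proof. by rewrite /vv; case: (R t); lia. Qed.

Lemma vv_new n lo R t : arc_ok n lo R -> t.+1 < n ->
  (vv lo R t.+1 < lo t) || (lo t + t < vv lo R t.+1).
Proof. by move=> H ht; have := H t ht; rewrite /vv; case: (R t.+1) => h; lia. Qed.

Lemma vv_inj n lo R s t : arc_ok n lo R -> s < t -> t < n -> vv lo R s <> vv lo R t.
Proof.
move=> H hst ht; case: t hst ht => [|t] // hst ht.
have [h1 h2] := arc_mono H (s := s) (t := t) ltac:(lia) ltac:(lia).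
have := vv_new H ht; have := vv_range lo R s; lia.
Qed.

Lemma mem_path_edges n (f : nat -> 'I_n) N e :
  e \in path_edges (mkseq f N) -> exists2 t, t.+1 < N & e = [set f t; f t.+1].
Proof.
rewrite /path_edges => /mapP [[x1 x2]] /(nthP (f 0, f 0)) [t ht] hx ->.
rewrite nth_zip_cond ht in hx.
rewrite size_zip size_behead !size_mkseq in ht.
rewrite nth_behead !nth_mkseq in hx; try lia.
by case: hx => <- <-; exists t => //; lia.
Qed.

Lemma arc_SHP n (Hn : 0 < n) lo R : arc_ok n lo R ->
  is_SHP (mkseq (fun t => ordn Hn (vv lo R t)) n).
Proof.
move=> H.
have win : forall t, t < n -> lo n.-1 <= vv lo R t < lo n.-1 + n.
  move=> t ht; have [h1 h2] := arc_mono H (s := t) (t := n.-1) ltac:(lia) ltac:(lia).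
  have := vv_range lo R t; lia.
have inj : forall s t, s < n -> t < n -> (vv lo R s) %% n = (vv lo R t) %% n -> s = t.
  move=> s t hs ht hm.
  have e := window_inj Hn (proj1 (andP (win s hs))) (proj2 (andP (win s hs)))
      (proj1 (andP (win t ht))) (proj2 (andP (win t ht))) hm.
  case: (ltngtP s t) => // hst.
  - by case: (vv_inj H hst ht e).
  - by case: (vv_inj H hst hs (esym e)).
have U : uniq (mkseq (fun t => ordn Hn (vv lo R t)) n).
  rewrite /mkseq map_inj_in_uniq ?iota_uniq // => s t; rewrite !mem_iota /= => hs ht.
  by move/(congr1 val) => /=; apply: inj; lia.
split.
  apply: uniq_perm => //; first exact: enum_uniq.
  apply: (uniq_min_size U _ _).2 => [x _|]; first exact: mem_enum.
  by rewrite size_enum_ord size_mkseq.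
move=> e f /mem_path_edges [t ht ->] /mem_path_edges [s hs ->].
wlog hst : s t hs ht / s <= t.
  move=> W hc; case: (leqP s t) => h; first exact: W hc.
  by apply: (W t s) => //; [apply: ltnW | apply: crossing_sym].
case: (ltngtP s t) hst => // [hst _|-> _]; last by apply: no_self_cross.
move=> hc.
set vo := fun t => ordn Hn (vv lo R t).
have [hm1 hm2] := arc_mono H (s := s.+1) (t := t) hst ltac:(lia).
have [hm3 hm4] := arc_mono H (s := s) (t := t) (ltnW hst) ltac:(lia).
have inarc : forall w, w \in [set vo s; vo s.+1] -> exists2 D, D <= t & val w = (lo t + D) %% n.
  move=> w /set2P [] ->.
    exists (vv lo R s - lo t); first by have := vv_range lo R s; lia.
    by rewrite /= subnKC //; have := vv_range lo R s; lia.
  exists (vv lo R s.+1 - lo t); first by have := vv_range lo R s.+1; lia.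
  by rewrite /= subnKC //; have := vv_range lo R s.+1; lia.
have Hs := H t ht.
have ntn : t < n by lia.
move: hc; rewrite /vo /vv; case hR : (R t.+1) in Hs *; case hRt : (R t).
- have hy : lo t.+1 + t.+1 = (lo t + t) + 1 by lia.
  rewrite hy => hc.
  have [z [w [hf [h1 h2 h3]]]] := crossing_cw hc (erefl _); rewrite /= in h1 h2 h3.
  by rewrite /= cw_fwd in h2; lia.
- have hy : lo t.+1 + t.+1 = lo t + t.+1 by lia.
  rewrite hy => hc.
  have [z [w [hf [h1 h2 h3]]]] := crossing_cw hc (erefl _); rewrite /= in h1 h2 h3.
  have hwf : w \in [set vo s; vo s.+1] by move: (set22 z w); rewrite -hf.
  have [D hD hw] := inarc w hwf.
  by rewrite hw !cw_fwd in h3; lia.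
- have hy : lo t + t = lo t.+1 + t.+1 by lia.
  rewrite hy setUC => hc.
  have [z [w [hf [h1 h2 h3]]]] := crossing_cw hc (erefl _); rewrite /= in h1 h2 h3.
  have hwf : w \in [set vo s; vo s.+1] by move: (set22 z w); rewrite -hf.
  have [D hD hw] := inarc w hwf.
  have hw' : val w = (lo t.+1 + D.+1) %% n by rewrite hw; congr (_ %% _); lia.
  by rewrite hw' !cw_fwd in h3; lia.
- have hy : lo t = lo t.+1 + 1 by lia.
  rewrite hy setUC => hc.
  have [z [w [hf [h1 h2 h3]]]] := crossing_cw hc (erefl _); rewrite /= in h1 h2 h3.
  by rewrite cw_fwd in h2; lia.
Qed.

Ltac ifs := repeat match goal with
  |- context [if ?c then _ else _] =>
     lazymatch c with
     | context [if _ then _ else _] => fail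
     | _ => let E := fresh "E" in case E: c
     end
  end.

Definition loG (u lo1 r t : nat) : nat :=
  let T1 := u - 2 * lo1 in let T2 := T1 + r in
  if t <= T1 then lo1 + (T1 - t + 1) %/ 2
  else if t <= T2 then lo1 else lo1 - (t - T2 + 1) %/ 2.

Definition RG (u lo1 r t : nat) : bool :=
  let T1 := u - 2 * lo1 in let T2 := T1 + r in
  if t <= T1 then (T1 - t) %% 2 == 1
  else if t <= T2 then true else (t - T2) %% 2 == 0.

Lemma G_ok n u lo1 r : 2 * lo1 <= u -> 0 < r -> n <= u - 2 * lo1 + r + 2 * lo1 ->
  arc_ok n (loG u lo1 r) (RG u lo1 r).
Proof.
move=> h1 h2 h3 t ht; rewrite /loG /RG /=.
by ifs; lia.
Qed.

Lemma switch_edge n lo R t : arc_ok n lo R -> t.+1 < n -> (t = 0 \/ R t.+1 != R t) ->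
  (vv lo R t = lo t.+1 /\ vv lo R t.+1 = lo t.+1 + t.+1) \/
  (vv lo R t = lo t.+1 + t.+1 /\ vv lo R t.+1 = lo t.+1).
Proof.
move=> H ht hsw; have := H t ht; rewrite /vv.
case: hsw => [->|]; first by case: (R 1); case: (R 0) => h; lia.
by case: (R t.+1); case: (R t) => // _ h; lia.
Qed.

Lemma G_switch u lo1 r t : 0 < r ->
  (t.+1 <= (u - 2 * lo1).+1 \/ u - 2 * lo1 + r < t.+1) ->
  (t = 0 \/ RG u lo1 r t.+1 != RG u lo1 r t).
Proof.
move=> hr h; case: t h => [|t] h; [by left | right].
rewrite /RG /=; ifs; repeat (case: eqP => ?); try done; lia.
Qed.

Lemma G_run u lo1 r t : u - 2 * lo1 < t -> t.+1 <= u - 2 * lo1 + r ->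
  vv (loG u lo1 r) (RG u lo1 r) t = lo1 + t /\
  vv (loG u lo1 r) (RG u lo1 r) t.+1 = lo1 + t + 1.
Proof.
move=> h1 h2; rewrite /vv /loG /RG /=; ifs; lia.
Qed.

Lemma G_sum1 u lo1 r t : 2 * lo1 <= u -> t <= (u - 2 * lo1).+1 -> 0 < r ->
  lo1 <= loG u lo1 r t /\
  (2 * loG u lo1 r t + t = u \/ 2 * loG u lo1 r t + t = u.+1).
Proof.
move=> h1 h2 hr; rewrite /loG /=; ifs; lia.
Qed.

Lemma G_sum3 u lo1 r t : 2 * lo1 <= u -> u - 2 * lo1 + r < t -> 
  2 * ((t - (u - 2 * lo1 + r) + 1) %/ 2) <= 2 * lo1 ->
  loG u lo1 r t < lo1 /\
  (2 * loG u lo1 r t + t = u + r - 1 \/ 2 * loG u lo1 r t + t = u + r).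
Proof.
move=> h1 h2 h3; rewrite /loG /=; ifs; lia.
Qed.

Lemma G_avoid N (HN : 0 < N) (B : {set {set 'I_N}}) u lo1 r :
  meets_all_SHP B -> 2 * lo1 <= u -> 0 < r -> N <= u - 2 * lo1 + r + 2 * lo1 ->
  (forall X Y, lo1 <= X -> X < Y -> Y <= X + (u - 2 * lo1).+1 ->
     (X + Y = u \/ X + Y = u.+1) -> [set ordn HN X; ordn HN Y] \notin B) ->
  (forall X, lo1 + (u - 2 * lo1) < X -> X.+1 <= lo1 + (u - 2 * lo1 + r) ->
     [set ordn HN X; ordn HN X.+1] \notin B) ->
  (forall X Y, X < lo1 -> X + (u - 2 * lo1 + r) < Y -> Y < X + N ->
     (X + Y = u + r - 1 \/ X + Y = u + r) -> [set ordn HN X; ordn HN Y] \notin B) ->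
  False.
Proof.
move=> Hm h1 h2 h3 P1 PR P3.
have ok := G_ok h1 h2 h3.
have [e eB /mem_path_edges [t ht he]] := Hm _ (arc_SHP HN ok).
move: eB; rewrite he; set T1 := u - 2 * lo1.
case: (leqP t.+1 T1.+1) => c1.
  have [[-> ->]|[-> ->]] := switch_edge ok ht (G_switch h2 (or_introl c1)).
  - have [hl hs] := G_sum1 h1 c1 h2.
    by apply/negP/P1 => //; lia.
  - have [hl hs] := G_sum1 h1 c1 h2.
    by rewrite setUC; apply/negP/P1 => //; lia.
case: (leqP t.+1 (T1 + r)) => c2.
  have [-> ->] := @G_run u lo1 r t ltac:(lia) c2.
  by rewrite addn1; apply/negP/PR; lia.
have h4 : 2 * ((t.+1 - (T1 + r) + 1) %/ 2) <= 2 * lo1 by lia.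
have [hl hs] := G_sum3 h1 c2 h4.
have [[-> ->]|[-> ->]] := switch_edge ok ht (G_switch h2 (or_intror c2)).
- by apply/negP/P3 => //; lia.
- by rewrite setUC; apply/negP/P3 => //; lia.
Qed.

Lemma dir2 n (x y : 'I_n) : x != y -> direction [set x; y] = (x + y) %% n.
Proof.
move=> hxy; rewrite /direction big_setU1 /= ?big_set1 //.
by rewrite in_set1.
Qed.

Lemma dir_unw N (HN : 0 < N) X Y : X < Y -> Y < X + N ->
  direction [set ordn HN X; ordn HN Y] = (X + Y) %% N.
Proof.
move=> h1 h2; rewrite dir2 /= ?modnDm //.
apply/negP => /eqP /(congr1 val) /= h.
have := @window_inj N X X Y HN ltac:(lia) ltac:(lia) ltac:(lia) h2 h; lia.
Qed.

Lemma mod_odd m t : t < m -> (2 * t + 1) %% (2 * m).-1 = if t.+1 == m then 0 else 2 * t + 1.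
Proof.
move=> ht; case: eqP => h.
  have -> : 2 * t + 1 = (2 * m).-1 by lia.
  exact: modnn.
rewrite modn_small //; lia.
Qed.

Lemma mod2N x N : x < 2 * N -> x %% N = if x < N then x else x - N.
Proof.
move=> h; case: ifP => h'; first by rewrite modn_small.
by rewrite (@modn_q x 1); lia.
Qed.

Lemma modS2N x N : (x + 2 * N) %% N = x %% N.
Proof. by rewrite addnC modnMDl. Qed.

Lemma B_dirs m (B : {set {set 'I_(2 * m).-1}}) : 0 < m -> #|B| = m ->
  (forall t, (t < m)%N ->
     exists e, [/\ e \in B, direction e = (2 * t + 1) %% (2 * m).-1 &
       forall f, f \in B -> direction f = (2 * t + 1) %% (2 * m).-1 -> f = e]) ->
  forall e, e \in B -> exists2 t, t < m & direction e = (2 * t + 1) %% (2 * m).-1.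
Proof.
move=> hm hB Hd.
pose F (t : 'I_m) := odflt set0 [pick e in B | direction e == (2 * t + 1) %% (2 * m).-1].
have FP : forall t : 'I_m, F t \in B /\ direction (F t) = (2 * t + 1) %% (2 * m).-1.
  move=> t; rewrite /F; case: pickP => [e /andP[h1 /eqP h2]|H0] //=.
  have [e [h1 h2 _]] := Hd t (ltn_ord t).
  by have := H0 e; rewrite h1 h2 eqxx.
have Finj : injective F.
  move=> t1 t2 h; have [_ d1] := FP t1; have [_ d2] := FP t2.
  rewrite h d2 !mod_odd ?ltn_ord // in d1.
  by apply: val_inj => /=; move: d1; case: eqP; case: eqP => //= ? ?; lia.
have sub : F @: setT \subset B by apply/subsetP => e /imsetP [t _ ->]; exact: (FP t).1.
have card : #|F @: setT| = m by rewrite card_imset // cardsT card_ord.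
have eq : F @: setT = B by apply/eqP; rewrite eqEcard sub hB card leqnn.
move=> e; rewrite -eq => /imsetP [t _ ->]; exists (nat_of_ord t); [exact: ltn_ord | exact: (FP t).2].
Qed.

Lemma neq_res N K X q : K < N -> K + q * N < X -> X < K + q.+1 * N -> X %% N <> K.
Proof.
move=> hK h1 h2.
have -> : X = (K + (X - K - q * N)) + q * N by lia.
rewrite addnC modnMDl mod2N; last by rewrite mulSn in h2; lia.
rewrite mulSn in h2; case: ifP; lia.
Qed.

Lemma mod3N x N : x < 3 * N -> x %% N = if x < N then x else if x < 2 * N then x - N else x - 2 * N.
Proof.
move=> h; case: ifP => h1; first by rewrite modn_small.
case: ifP => h2; first by rewrite (@modn_q x 1); lia.
by rewrite (@modn_q x 2); lia.
Qed.

Lemma partner N d : odd N -> 3 <= N -> 2 <= d -> d.+1 < 2 * N -> (d %% N = 0 \/ odd (d %% N)) ->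
  ~ ((if d == N.+1 then d.+1 else d.-1) %% N = 0 \/ odd ((if d == N.+1 then d.+1 else d.-1) %% N)).
Proof.
move=> hN hN3 hd hd2; case: eqP => e; rewrite !mod2N; try lia.
  by ifs; lia.
by ifs; lia.
Qed.

Lemma resS N S : 2 * N <= S -> S %% N = (S - 2 * N) %% N.
Proof. by move=> h; rewrite -[in LHS](subnK h) modS2N. Qed.

Definition isD N d := (d %% N == 0) || odd (d %% N).

Lemma partner' N d : odd N -> 3 <= N -> 2 <= d -> d.+1 < 2 * N -> isD N d ->
  ~~ isD N (if d == N.+1 then d.+1 else d.-1).
Proof.
move=> h1 h2 h3 h4 h5; apply/negP => h6.
apply: (partner h1 h2 h3 h4).
  by move: h5; rewrite /isD => /orP [/eqP ->|->]; [left|right].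
by move: h6; rewrite /isD => /orP [/eqP ->|->]; [left|right].
Qed.

Lemma isD2N N S : 2 * N <= S -> isD N S = isD N (S - 2 * N).
Proof. by move=> h; rewrite /isD resS. Qed.

Lemma contra N (HN : 0 < N) (B : {set {set 'I_N}}) m alpha b (i k : 'I_N) j' l' :
  N.+1 = 2 * m -> 2 <= m -> meets_all_SHP B ->
  (forall X Y, X < Y -> Y < X + N -> [set ordn HN X; ordn HN Y] \in B -> isD N (X + Y)) ->
  (forall X, (X %% N < alpha \/ b <= X %% N) -> [set ordn HN X; ordn HN X.+1] \notin B) ->
  (forall X Y, X < Y -> Y < X + N -> [set ordn HN X; ordn HN Y] \in B ->
     isD N (X + Y) -> (X + Y) %% N = (i + j') %% N -> X %% N = i \/ Y %% N = i) ->
  (forall X Y, X < Y -> Y < X + N -> [set ordn HN X; ordn HN Y] \in B ->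
     (X + Y) %% N = (k + l') %% N -> X %% N = k \/ Y %% N = k) ->
  (forall X Y, X < Y -> Y < X + N -> [set ordn HN X; ordn HN Y] \in B ->
     (X + Y) %% N = (2 * alpha + 1 + N) %% N -> X %% N = alpha.+1 \/ Y %% N = alpha.+1) ->
  isD N (i + j') -> isD N (k + l') -> isD N (2 * alpha + 1 + N) ->
  alpha < i -> i < k -> k < b -> b <= m ->
  b < j' < N + alpha -> b < l' < N + alpha -> i + j' < k + l' -> False.
Proof.
move=> hNm hm Hm ch runS e1 e2 eA D1 D2 DA hai hik hkb hbm hj hl hp.
have hoddN : odd N by lia.
have N3 : 3 <= N by lia.
set up := if k + l' == N.+1 then k + l' else (k + l').-1.
have hup : up = k + l' \/ up.+1 = k + l' by rewrite /up; case: eqP => _; lia.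
have hup2 : k + l' = N.+1 -> up = k + l' by rewrite /up => ->; rewrite eqxx.
have hup3 : k + l' <> N.+1 -> up.+1 = k + l' by rewrite /up; case: eqP => //; lia.
have ph3 : forall X Y, 2 * N <= X + Y -> (X + Y - 2 * N = up \/ X + Y - 2 * N = up.+1) ->
    X < Y -> Y < X + N -> [set ordn HN X; ordn HN Y] \in B -> X %% N = k \/ Y %% N = k.
  move=> X Y hS hS2 hXY hYX hin.
  have hD := ch X Y hXY hYX hin; rewrite isD2N // in hD.
  case: (eqVneq (X + Y - 2 * N) (k + l')) => e.
    by apply: e2 => //; rewrite resS // e.
  have e' : X + Y - 2 * N = (if k + l' == N.+1 then (k + l').+1 else (k + l').-1).
    by move: hS2; rewrite /up; case: eqP; lia.
  by move: hD; rewrite e' => hD; have := @partner' N (k + l') hoddN N3 ltac:(lia) ltac:(lia) D2; rewrite hD.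
case: (leqP up (N + alpha + i)) => hR.
-
  set u1 := if i + j' == N.+1 then i + j' else (i + j').-1.
  have hu1 : u1 = i + j' \/ u1.+1 = i + j' by rewrite /u1; case: eqP => _; lia.
  apply: (@G_avoid N HN B (u1 + 2 * N) (i.+1 + N) (up - u1 + 1) Hm); try lia.
  + move=> X Y h1 h2 h3 hS; apply/negP => hin.
    have Yb : Y < X + N by lia.
    have hD := ch X Y h2 Yb hin; rewrite isD2N in hD; last lia.
    case: (eqVneq (X + Y - 2 * N) (i + j')) => e.
      have [] := e1 X Y h2 Yb hin (ch X Y h2 Yb hin) ltac:(by rewrite resS ?e; lia).
        by apply: (@neq_res N i X 1); lia.
      by apply: (@neq_res N i Y 1); lia.
    have e' : X + Y - 2 * N = (if i + j' == N.+1 then (i + j').+1 else (i + j').-1).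
      by move: hS; rewrite /u1; case: eqP; lia.
    by move: hD; rewrite e' => hD; have := @partner' N (i + j') hoddN N3 ltac:(lia) ltac:(lia) D1; rewrite hD.
  + move=> X h1 h2; apply: runS; rewrite mod3N; last lia.
    by ifs; lia.
  + move=> X Y h1 h2 h3 hS; apply/negP => hin.
    have [] := ph3 X Y ltac:(lia) ltac:(lia) ltac:(lia) h3 hin.
      by apply: (@neq_res N k X 0); lia.
    by apply: (@neq_res N k Y 1); lia.
-
  set u2 := if 2 * alpha + 1 + N == N.+1 then 2 * alpha + 1 + N else (2 * alpha + 1 + N).-1.
  have hu2 : u2 = 2 * alpha + 1 + N \/ u2.+1 = 2 * alpha + 1 + N by rewrite /u2; case: eqP => _; lia.
  apply: (@G_avoid N HN B (u2 + 2 * N) (k + N) (up - u2 + 1) Hm); try lia.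
  + move=> X Y h1 h2 h3 hS; apply/negP => hin.
    have Yb : Y < X + N by lia.
    have hD := ch X Y h2 Yb hin; rewrite isD2N in hD; last lia.
    case: (eqVneq (X + Y - 2 * N) (2 * alpha + 1 + N)) => e.
      have [] := eA X Y h2 Yb hin ltac:(by rewrite resS ?e; lia).
        by apply: (@neq_res N alpha.+1 X 1); lia.
      by apply: (@neq_res N alpha.+1 Y 1); lia.
    have e' : X + Y - 2 * N = (if 2 * alpha + 1 + N == N.+1 then (2 * alpha + 1 + N).+1 else (2 * alpha + 1 + N).-1).
      by move: hS; rewrite /u2; case: eqP; lia.
    by move: hD; rewrite e' => hD; have := @partner' N (2 * alpha + 1 + N) hoddN N3 ltac:(lia) ltac:(lia) DA; rewrite hD.
  + move=> X h1 h2; apply: runS; rewrite mod3N; last lia.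
    by ifs; lia.
  + move=> X Y h1 h2 h3 hS; apply/negP => hin.
    have [] := ph3 X Y ltac:(lia) ltac:(lia) ltac:(lia) h3 hin.
      by apply: (@neq_res N k X 0); lia.
    by apply: (@neq_res N k Y 1); lia.
Qed.

Lemma run_safe N (HN : 0 < N) (B : {set {set 'I_N}}) m alpha b :
  N.+1 = 2 * m -> 2 <= m ->
  (forall e, e \in B -> direction e = 0 \/ odd (direction e)) ->
  (forall t, (t < alpha)%N -> ~~ has_edge B t t.+1) ->
  (forall t, (b <= t < m)%N -> ~~ has_edge B t t.+1) ->
  forall X, (X %% N < alpha \/ b <= X %% N) -> [set ordn HN X; ordn HN X.+1] \notin B.
Proof.
move=> hNm hm BD hA hB X hX; apply/negP => hin.
have xN : X %% N < N := ltn_pmod _ HN.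
have hd := BD _ hin; rewrite dir_unw in hd; [|lia|lia].
rewrite -modnDm in hd.
have e1 : X.+1 %% N = if (X %% N).+1 < N then (X %% N).+1 else 0.
  rewrite -addn1 -modnDml addn1; case: ifP => h; first by rewrite modn_small.
  have -> : (X %% N).+1 = N by lia.
  by rewrite modnn.
rewrite e1 in hd.
have hE : (X %% N).+1 < N -> m <= X %% N -> False.
  move=> h1 h2; move: hd; rewrite ifT // mod2N; last lia.
  move: (X %% N) xN hX h1 h2 => x x1 x2 x3 x4; ifs; lia.
have hF : (X %% N).+1 < N -> X %% N < m -> has_edge B (X %% N) (X %% N).+1.
  move=> h1 h2; apply/existsP; exists (ordn HN X); apply/existsP; exists (ordn HN X.+1).
  by rewrite /= e1 h1 !eqxx hin.
case: (ltnP (X %% N).+1 N) => h1.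
  case: (ltnP (X %% N) m) => h2; last exact: hE.
  have := hF h1 h2; case: hX => h3.
    by rewrite (negbTE (hA _ h3)).
  by rewrite (negbTE (hB (X %% N) ltac:(lia))).
move: hd; rewrite ifF; last lia.
rewrite addn0 modn_mod.
move: (X %% N) xN h1 => x x1 x2; lia.
Qed.

Lemma main2 m N (HN : 0 < N) (B : {set {set 'I_N}}) (alpha delta : nat) (i j k l : 'I_N) :
  N.+1 = 2 * m -> 2 <= m -> meets_all_SHP B ->
  (forall e, e \in B -> direction e = 0 \/ odd (direction e)) ->
  (forall e f, e \in B -> f \in B -> direction e = direction f -> e = f) ->
  (alpha < m)%N -> has_edge B alpha alpha.+1 ->
  (forall t, (t < alpha)%N -> ~~ has_edge B t t.+1) ->
  (delta < m)%N ->
  (forall t, (m - delta <= t < m)%N -> ~~ has_edge B t t.+1) ->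
  [set i; j] \in B -> [set k; l] \in B ->
  (alpha < i < k)%N -> (k < m - delta)%N ->
  ~~ (alpha <= j <= m - delta)%N -> ~~ (alpha <= l <= m - delta)%N ->
  (0 < cw_offset N i k < cw_offset N i l)%N /\
  (cw_offset N i l < cw_offset N i j)%N /\
  (k - i < vdist N l j)%N.
Proof.
move=> hNm hm Hm BD BU ha hEa hA hdel hDel hij hkl /andP[hai hik] hkb hj hl.
have iN := ltn_ord i; have jN := ltn_ord j; have kN := ltn_ord k; have lN := ltn_ord l.
have hoddN : odd N by lia.
have N3 : 3 <= N by lia.
have hj' : (m - delta < j /\ (if m - delta < j then nat_of_ord j else j + N) = j) \/
           (j < alpha /\ (if m - delta < j then nat_of_ord j else j + N) = j + N).
  by case: ifP => h; [left|right]; lia.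
have hl' : (m - delta < l /\ (if m - delta < l then nat_of_ord l else l + N) = l) \/
           (l < alpha /\ (if m - delta < l then nat_of_ord l else l + N) = l + N).
  by case: ifP => h; [left|right]; lia.
move: hj' hl'.
set j' := (if m - delta < j then nat_of_ord j else j + N).
set l' := (if m - delta < l then nat_of_ord l else l + N).
move=> hj' hl'.
have dij : direction [set i; j] = (i + j') %% N.
  rewrite dir2; last by apply/negP => /eqP h; subst; lia.
  by case: hj' => [[_ ->]|[_ ->]] //; rewrite addnA modnDr.
have dkl : direction [set k; l] = (k + l') %% N.
  rewrite dir2; last by apply/negP => /eqP h; subst; lia.
  by case: hl' => [[_ ->]|[_ ->]] //; rewrite addnA modnDr.
case: (ltngtP (i + j') (k + l')) => hp; last first.
- exfalso; have e := BU _ _ hij hkl (etrans dij (etrans (congr1 (modn^~ N) hp) (esym dkl))).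
  have : i \in [set k; l] by rewrite -e set21.
  case/set2P => h; subst; lia.
- have ck : cw_offset N i k = k - i by rewrite /cw_offset (@modn_q _ 1); lia.
  have cl : cw_offset N i l = l' - i.
    rewrite /cw_offset; case: hl' => [[h3 ->]|[h3 ->]].
      by rewrite (@modn_q _ 1); lia.
    by rewrite modn_small; lia.
  have cj : cw_offset N i j = j' - i.
    rewrite /cw_offset; case: hj' => [[h3 ->]|[h3 ->]].
      by rewrite (@modn_q _ 1); lia.
    by rewrite modn_small; lia.
  rewrite ck cl cj /vdist leq_min.
  clear ck cl cj dij dkl BD BU hA hDel hEa Hm hij hkl hoddN.
  have hb : m - delta <= m by lia.
  have hd : (l - j) + (j - l) = j' - l' \/ (l - j) + (j - l) = N - (j' - l').
    by case: hj' => [[h1 h2]|[h1 h2]]; case: hl' => [[h3 h4]|[h3 h4]]; rewrite h2 h4 in hp *; lia.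
  have hl1 : m - delta < l' < N + alpha by case: hl' => [[h3 ->]|[h3 ->]]; lia.
  have hj1 : m - delta < j' < N + alpha by case: hj' => [[h3 ->]|[h3 ->]]; lia.
  clear hj' hl'; move: hd hl1 hj1 hp; move: (l - j + (j - l)) j' l' => d x y.
  clear -hai hik hkb hNm hm hdel ha iN kN; move=> hd hy hx hp.
  lia.
exfalso.
have hl1 : m - delta < l' < N + alpha by case: hl' => [[h3 ->]|[h3 ->]]; lia.
have hj1 : m - delta < j' < N + alpha by case: hj' => [[h3 ->]|[h3 ->]]; lia.
have hbm : m - delta <= m by lia.
have hNa : alpha.+1 < N by lia.
move/existsP: hEa => [a0 /existsP [b0 /and3P [/eqP ha0 /eqP hb0 hin0]]].
have dA : direction [set a0; b0] = (2 * alpha + 1 + N) %% N.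
  rewrite dir2; last by apply/negP => /eqP h; subst; lia.
  by rewrite modnDr ha0 hb0; congr (_ %% _); lia.
apply: (@contra N HN B m alpha (m - delta) i k j' l' hNm hm Hm) => //.
- move=> X Y h1 h2 hin; have := BD _ hin; rewrite dir_unw // /isD.
  by case=> ->; rewrite ?eqxx ?orbT.
- exact: (run_safe HN hNm hm BD hA hDel).
- move=> X Y h1 h2 hin _ hS.
  have e : [set ordn HN X; ordn HN Y] = [set i; j] by apply: BU => //; rewrite dir_unw // hS dij.
  have : i \in [set ordn HN X; ordn HN Y] by rewrite e set21.
  by case/set2P => ->; [left|right].
- move=> X Y h1 h2 hin hS.
  have e : [set ordn HN X; ordn HN Y] = [set k; l] by apply: BU => //; rewrite dir_unw // hS dkl.
  have : k \in [set ordn HN X; ordn HN Y] by rewrite e set21.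
  by case/set2P => ->; [left|right].
- move=> X Y h1 h2 hin hS.
  have e : [set ordn HN X; ordn HN Y] = [set a0; b0] by apply: BU => //; rewrite dir_unw // hS dA.
  have : b0 \in [set ordn HN X; ordn HN Y] by rewrite e set22.
  by case/set2P => /(congr1 val) /= h; [left|right]; rewrite -h hb0.
- by rewrite /isD -dij; case: (BD _ hij) => ->; rewrite ?eqxx ?orbT.
- by rewrite /isD -dkl; case: (BD _ hkl) => ->; rewrite ?eqxx ?orbT.
- by rewrite /isD -dA; case: (BD _ hin0) => ->; rewrite ?eqxx ?orbT.
Qed.

Theorem proposition5 (m : nat) (B : {set {set 'I_(2 * m).-1}})
  (alpha delta : nat) (i j k l : 'I_(2 * m).-1) :
  (2 <= m)%N ->
  is_blocker B ->
  #|B| = m ->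
  (forall t, (t < m)%N ->
     exists e, [/\ e \in B, direction e = (2 * t + 1) %% (2 * m).-1 &
       forall f, f \in B -> direction f = (2 * t + 1) %% (2 * m).-1 -> f = e]) ->
  (alpha < m)%N -> has_edge B alpha alpha.+1 ->
  (forall t, (t < alpha)%N -> ~~ has_edge B t t.+1) ->
  (delta < m)%N -> has_edge B (m - delta).-1 (m - delta) ->
  (forall t, (m - delta <= t < m)%N -> ~~ has_edge B t t.+1) ->
  [set i; j] \in B -> [set k; l] \in B ->
  (alpha < i < k)%N -> (k < m - delta)%N ->
  ~~ (alpha <= j <= m - delta)%N -> ~~ (alpha <= l <= m - delta)%N ->
  (0 < cw_offset (2 * m).-1 i k < cw_offset (2 * m).-1 i l)%N /\
  (cw_offset (2 * m).-1 i l < cw_offset (2 * m).-1 i j)%N /\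
  (k - i < vdist (2 * m).-1 l j)%N.
Proof.
move=> hm Hbl hB Hd ha hEa hA hdel hEb hDel hij hkl hik hkb hj hl.
have HN : 0 < (2 * m).-1 by lia.
have Bd := B_dirs (ltac:(lia) : 0 < m) hB Hd.
apply: (@main2 m (2 * m).-1 HN B alpha delta i j k l) => //.
- lia.
- exact: Hbl.2.1.
- move=> e he; have [t ht ->] := Bd e he; rewrite mod_odd //.
  by case: eqP => _; [left|right]; lia.
- move=> e f he hf hef; have [t ht hd] := Bd e he; have [g [_ _ hg]] := Hd t ht.
  by rewrite (hg e he hd) (hg f hf (etrans (esym hef) hd)).
Qed.
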